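(* Let $p$ be a prime and $G=\Gamma(Tr(\mathbb{Z}_{p^2}))$. Then $$|E(G)|=\tfrac12\,p^2(p^2-1)\left(p^6+p^5-p^4-2p^2-1\right).$$
   Context: For a ring $S$ with identity whose center $Z(S)$ is not all of $S$, the commuting graph $\Gamma(S)$ is the simple graph with vertex set $S\setminus Z(S)$, in which two distinct vertices $a,b$ are adjacent iff $ab=ba$; $E(G)$ is the edge set. $Tr(R)$ denotes the ring of all $2\times 2$ upper triangular matrices over $R$. *)

(* Defs.v *)
From HB Require Import structures.
From mathcomp Require Import all_boot all_order all_algebra.
Set Implicit Arguments. Unset Strict Implicit. Unset Printing Implicit Defensive.
Import GRing.Theory.
Local Open Scope ring_scope.

(* R := Z_{n} realized as 'Z_n (n >= 2 in all uses). *)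

(* Tr(R): the ring of 2x2 upper triangular matrices over R, realized as the
   set of 2x2 matrices whose (1,0) entry (lower-left) is zero; the ring
   operations are those of 'M[R]_2 (Tr(R) is a subring). *)

Section Commuting.
Variable R : finNzRingType.

Definition upperTr : {set 'M[R]_2} :=
  [set A : 'M[R]_2 | A ord_max ord0 == 0].

Definition centerTr : {set 'M[R]_2} :=
  [set A in upperTr | [forall B in upperTr, A *m B == B *m A]].

Definition commVertices : {set 'M[R]_2} := upperTr :\: centerTr.

Definition commEdges : {set {set 'M[R]_2}} :=
  [set E : {set 'M[R]_2} |
     [exists A in commVertices, exists B in commVertices,
        [&& A != B, A *m B == B *m A & E == [set A; B]]]].
End Commuting.

(* Main.v *)
From HB Require Import structures.
Require Import Defs.
From mathcomp Require Import all_boot all_order all_algebra.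
From mathcomp Require Import ring zify.
Set Implicit Arguments. Unset Strict Implicit. Unset Printing Implicit Defensive.
Import GRing.Theory.
Lemma count_mult (p k : nat) : 0 < p -> \sum_(0 <= i < p * k) (p %| i) = k.
Proof.
move=> p0; elim: k => [|k IH]; first by rewrite muln0 big_geq.
rewrite mulnS addnC (@big_cat_nat _ _ _ (p * k)) //=; last by rewrite leq_addr.
rewrite IH -{1}(add0n (p * k)) big_addn addKn big_mkord -addn1; congr (_ + _).
clear IH.
case: p p0 => // p' _.
rewrite big_ord_recl /= add0n dvdn_mulr // big1 ?addn0 ?add1n // => i _.
rewrite dvdn_addl ?dvdn_mulr //.
suff -> : (p'.+1 %| bump 0 i) = false by [].
apply/negP => /dvdn_leq; rewrite /bump /= add1n => H; have := H isT; have := ltn_ord i; lia.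
Qed.

Local Open Scope ring_scope.

Lemma ord2P (i : 'I_2) : i = ord0 \/ i = ord_max.
Proof. case: i => [[|[|//]] Hi]; [left|right]; exact: val_inj. Qed.

Definition mk (R : finComUnitRingType) (d x y : R) : 'M[R]_2 :=
  \matrix_(i, j) if i == ord0 then (if j == ord0 then d + x else y)
                 else (if j == ord0 then 0 else d).

Lemma mkE (R : finComUnitRingType) (d x y : R) :
  [/\ mk d x y ord0 ord0 = d + x, mk d x y ord0 ord_max = y,
      mk d x y ord_max ord0 = 0 & mk d x y ord_max ord_max = d].
Proof. by rewrite !mxE. Qed.

Lemma mk_up (R : finComUnitRingType) (d x y : R) : mk d x y \in upperTr R.
Proof. by rewrite inE mxE. Qed.

Lemma upP (R : finComUnitRingType) (A : 'M[R]_2) : A \in upperTr R ->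
  A = mk (A ord_max ord_max) (A ord0 ord0 - A ord_max ord_max) (A ord0 ord_max).
Proof.
rewrite inE => /eqP H; apply/matrixP => i j; rewrite mxE.
case: (ord2P i) => ->; case: (ord2P j) => -> //=.
by rewrite addrC subrK.
Qed.

Lemma mk_inj (R : finComUnitRingType) (d x y d' x' y' : R) :
  mk d x y = mk d' x' y' -> [/\ d = d', x = x' & y = y'].
Proof.
move=> H.
have := congr1 (fun A : 'M[R]_2 => A ord_max ord_max) H; rewrite !mxE /= => Hd.
have := congr1 (fun A : 'M[R]_2 => A ord0 ord_max) H; rewrite !mxE /= => Hy.
have := congr1 (fun A : 'M[R]_2 => A ord0 ord0) H; rewrite !mxE /= Hd => /addrI Hx.
by [].
Qed.

Lemma mulmx2E (R : finComUnitRingType) (A B : 'M[R]_2) i j :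
  (A *m B) i j = A i ord0 * B ord0 j + A i ord_max * B ord_max j.
Proof. rewrite !mxE !big_ord_recl big_ord0 addr0 /=. have -> : lift ord0 ord0 = ord_max :> 'I_2 by apply: val_inj. by []. Qed.

Lemma comm_mk (R : finComUnitRingType) (d x y d' x' y' : R) :
  (mk d x y *m mk d' x' y' == mk d' x' y' *m mk d x y) = (y' * x == y * x').
Proof.
apply/eqP/eqP => [H|H].
  have := congr1 (fun A : 'M[R]_2 => A ord0 ord_max) H; rewrite !mulmx2E !mxE /=.
  move/eqP; rewrite -subr_eq0 => /eqP H2; apply/eqP; rewrite -subr_eq0; apply/eqP.
  by rewrite -H2; ring.
apply/matrixP => i j; rewrite !mulmx2E !mxE.
case: (ord2P i) => ->; case: (ord2P j) => -> /=; rewrite ?mxE /=; try ring.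
apply/eqP; rewrite -subr_eq0; apply/eqP.
have -> : (d + x) * y' + y * d' - ((d' + x') * y + y' * d) = y' * x - y * x' by ring.
by rewrite H subrr.
Qed.
Lemma sum_const_nat (T : finType) (c : nat) : (\sum_(i : T) c = #|T| * c)%N.
Proof. by rewrite sum_nat_const. Qed.

Lemma sum_eq1 (T : finType) (c : T) : (\sum_(i : T) (i == c) = 1)%N.
Proof. by rewrite (bigD1 c) //= eqxx big1 // => i /negbTE ->. Qed.

Definition K (R : finComUnitRingType) (x y : R) : nat :=
  \sum_(x' : R) \sum_(y' : R) (y' * x == y * x')%R.

Lemma K_sym (R : finComUnitRingType) (x y : R) : K x y = K y x.
Proof.
rewrite /K exchange_big /=; apply: eq_bigr => a _; apply: eq_bigr => b _.
by congr nat_of_bool; apply/eqP/eqP => H; rewrite mulrC -H mulrC.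
Qed.

Lemma K_unit (R : finComUnitRingType) (x y : R) : x \is a GRing.unit -> K x y = #|R|.
Proof.
move=> ux; rewrite /K -[#|R|]muln1 -sum_const_nat; apply: eq_bigr => a _.
rewrite -(sum_eq1 (y * a / x)); apply: eq_bigr => b _.
congr nat_of_bool; apply/eqP/eqP => [<-|->]; [by rewrite mulrK | by rewrite divrK].
Qed.

Lemma K_nonunit (R : finComUnitRingType) (pi : R) (p : nat)
  (Hnu : forall z : R, (pi * z == 0) = (z \notin GRing.unit))
  (Hcnt : (\sum_(z : R) (z \notin GRing.unit) = p)%N)
  (x1 y : R) : x1 \is a GRing.unit -> K (pi * x1) (pi * y) = (#|R| * p)%N.
Proof.
move=> ux; rewrite /K -sum_const_nat; apply: eq_bigr => a _.
rewrite -Hcnt [RHS](reindex_inj (addIr (- (y * a / x1)))) /=; apply: eq_bigr => b _.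
congr nat_of_bool; rewrite -Hnu.
have E : pi * (b - y * a / x1) * x1 = b * (pi * x1) - pi * y * a.
  by rewrite mulrBr mulrBl -[pi * (y * a / x1) * x1]mulrA divrK //; ring.
rewrite -subr_eq0 -E.
by apply/eqP/eqP => [H|->]; [apply: (mulIr ux); rewrite mul0r | rewrite mul0r].
Qed.

Lemma K_val (R : finComUnitRingType) (pi : R) (p : nat)
  (Hnu : forall z : R, (pi * z == 0) = (z \notin GRing.unit))
  (Hcnt : (\sum_(z : R) (z \notin GRing.unit) = p)%N)
  (Hfac : forall z : R, z \notin GRing.unit -> exists w, z = pi * w)
  (Hpi2 : pi * pi = 0)
  (x y : R) : ~~ ((x == 0) && (y == 0)) ->
  K x y = if (x \notin GRing.unit) && (y \notin GRing.unit) then (#|R| * p)%N else #|R|.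
Proof.
move=> nz.
case: (boolP (x \is a GRing.unit)) => ux /=; first exact: K_unit.
case: (boolP (y \is a GRing.unit)) => uy /=; first by rewrite K_sym K_unit.
have [x1 Hx1] := Hfac x ux; have [y1 Hy1] := Hfac y uy.
rewrite Hx1 Hy1 in nz *.
case: (boolP (x1 \is a GRing.unit)) => ux1; first exact: (K_nonunit Hnu Hcnt).
case: (boolP (y1 \is a GRing.unit)) => uy1; first by rewrite K_sym (K_nonunit Hnu Hcnt).
have [x2 Ex] := Hfac x1 ux1; have [y2 Ey] := Hfac y1 uy1.
by move: nz; rewrite Ex Ey !mulrA Hpi2 !mul0r eqxx.
Qed.

Lemma center_mk (R : finComUnitRingType) (d x y : R) :
  (mk d x y \in centerTr R) = (x == 0) && (y == 0).
Proof.
rewrite inE mk_up /=; apply/forall_inP/andP => [H|[/eqP -> /eqP ->] B /upP ->].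
  have := H _ (mk_up 0 0 1); rewrite comm_mk mul1r mulr0 => ->.
  by have := H _ (mk_up 0 1 0); rewrite comm_mk mul0r mulr1 eq_sym => ->.
by rewrite comm_mk mulr0 mul0r.
Qed.

Lemma sum_up (R : finComUnitRingType) (F : 'M[R]_2 -> nat) :
  (\sum_(A in upperTr R) F A = \sum_(d : R) \sum_(x : R) \sum_(y : R) F (mk d x y))%N.
Proof.
have E : upperTr R = [set mk t.1.1 t.1.2 t.2 | t : (R * R) * R].
  apply/setP => A; apply/idP/imsetP => [HA|[t _ ->]]; last exact: mk_up.
  by exists (A ord_max ord_max, A ord0 ord0 - A ord_max ord_max, A ord0 ord_max) => //; apply: upP.
rewrite E big_imset /=; last first.
  by move=> [[a b] c] [[a' b'] c'] _ _ /mk_inj [/= -> -> ->].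
rewrite (eq_bigl xpredT) // [RHS]pair_bigA [RHS]pair_bigA /=. by [].
Qed.

Lemma set2_eq (T : finType) (X Y A B : T) : A != B -> [set X; Y] = [set A; B] ->
  (X = A /\ Y = B) \/ (X = B /\ Y = A).
Proof.
move=> nAB E.
have hA : A \in [set X; Y] by rewrite E set21.
have hB : B \in [set X; Y] by rewrite E set22.
have hX : X \in [set A; B] by rewrite -E set21.
case/set2P: hX => HX; subst X.
  left; split => //; case/set2P: hB => // hB; by rewrite hB eqxx in nAB.
right; split => //; case/set2P: hA => // hA; by rewrite hA eqxx in nAB.
Qed.

Lemma edges2 (R : finComUnitRingType) :
  (#|commEdges R| * 2 = \sum_(A in commVertices R) \sum_(B in commVertices R)
      ((A != B) && (A *m B == B *m A)))%N.
Proof.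
set V := commVertices R.
rewrite pair_big /=.
rewrite (_ : \sum_(i | (i.1 \in V) && (i.2 \in V)) _ =
   \sum_(i | [&& i.1 \in V, i.2 \in V, i.1 != i.2 & i.1 *m i.2 == i.2 *m i.1]) 1)%N;
  last first.
  rewrite big_mkcond [RHS]big_mkcond /=; apply: eq_bigr => i _.
  by case: (i.1 \in V); case: (i.2 \in V); case: (i.1 != i.2); case: (_ == _).
rewrite (partition_big (fun i => [set i.1; i.2]) (mem (commEdges R))) /=; last first.
  move=> [A B] /and4P [hA hB nAB cAB] /=; rewrite inE.
  by apply/existsP; exists A; rewrite hA; apply/existsP; exists B; rewrite hB nAB cAB eqxx.
rewrite -sum_nat_const; apply: eq_bigr => E; rewrite inE.
case/exists_inP => A hA /exists_inP [B hB /and3P [nAB cAB /eqP ->]].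
rewrite -[LHS](_ : #|[set (A, B); (B, A)]| = 2)%N; last first.
  by rewrite cards2; case: eqP => // [[E1]]; rewrite E1 eqxx in nAB.
rewrite -sum1_card; apply: eq_bigl => [[X Y]] /=; rewrite in_set2.
apply/idP/idP.
  case/orP => /eqP [-> ->]; rewrite hA hB ?nAB ?cAB /=; first by apply/eqP.
  by rewrite eq_sym nAB (eqP cAB) eqxx /=; apply/eqP; rewrite setUC.
case/andP => /and4P [hX hY nXY cXY] /eqP /(set2_eq nAB) [[-> ->]|[-> ->]];
by rewrite eqxx ?orbT.
Qed.

Lemma sum_V (R : finComUnitRingType) (F : 'M[R]_2 -> nat) :
  (\sum_(A in commVertices R) F A = \sum_(d : R) \sum_(x : R) \sum_(y : R)
     (~~ ((x == 0%R) && (y == 0%R))) * F (mk d x y))%N.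
Proof.
transitivity (\sum_(A in upperTr R) (if A \notin centerTr R then F A else 0))%N.
  rewrite [LHS]big_mkcond [RHS]big_mkcond /=; apply: eq_bigr => A _.
  rewrite /commVertices in_setD.
  by rewrite andbC; case: (A \in upperTr R).
rewrite sum_up; apply: eq_bigr => d _; apply: eq_bigr => x _; apply: eq_bigr => y _.
by rewrite center_mk; case: (_ && _); rewrite ?mul1n ?mul0n.
Qed.

Lemma diag_split (R : finComUnitRingType) :
  (\sum_(A in commVertices R) \sum_(B in commVertices R) ((A != B) && (A *m B == B *m A))
   + #|commVertices R| =
   \sum_(A in commVertices R) \sum_(B in commVertices R) (A *m B == B *m A))%N.
Proof.
rewrite -sum1_card -big_split /=; apply: eq_bigr => A hA.
rewrite (bigD1 A hA) [X in _ = X](bigD1 A hA) /= eqxx /= add0n addnC.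
rewrite eqxx; apply: f_equal.
apply: eq_bigr => B.
by case/andP => _; rewrite eq_sym => ->.
Qed.

Lemma sum2_zero (R : finComUnitRingType) :
  (\sum_(x : R) \sum_(y : R) ((x == 0%R) && (y == 0%R)) = 1)%N.
Proof.
rewrite -(sum_eq1 (0 : R)); apply: eq_bigr => x _.
rewrite -[RHS]muln1 -(sum_eq1 (0 : R)) big_distrr /=; apply: eq_bigr => y _.
by case: (x == 0%R); case: (y == 0%R).
Qed.

Definition nz (R : finComUnitRingType) (x y : R) : bool := ~~ ((x == 0) && (y == 0)).
Definition Kp (R : finComUnitRingType) (x y : R) : nat :=
  \sum_(x' : R) \sum_(y' : R) (nz x' y' * (y' * x == y * x')%R)%N.

Lemma Kp_K (R : finComUnitRingType) (x y : R) : (Kp x y + 1 = K x y)%N.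
Proof.
rewrite /Kp /K -(sum2_zero R) -big_split /=; apply: eq_bigr => a _.
rewrite -big_split /=; apply: eq_bigr => b _; rewrite /nz.
case: (boolP ((a == 0) && (b == 0))) => [/andP [/eqP -> /eqP ->]|_] /=.
  by rewrite mul0r mulr0 eqxx.
by rewrite mul1n addn0.
Qed.

Lemma e1 (R : finComUnitRingType) :
  (#|commEdges R| * 2 + #|R| * (\sum_(x : R) \sum_(y : R) nz x y)
   = #|R| * #|R| * (\sum_(x : R) \sum_(y : R) nz x y * Kp x y))%N.
Proof.
have hV : #|commVertices R| = (#|R| * \sum_(x : R) \sum_(y : R) nz x y)%N.
  rewrite -sum1_card sum_V -sum_const_nat; apply: eq_bigr => d _.
  by apply: eq_bigr => x _; apply: eq_bigr => y _; rewrite muln1.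
rewrite -hV edges2 diag_split sum_V -mulnA.
rewrite -sum_const_nat; apply: eq_bigr => d _.
rewrite big_distrr /=; apply: eq_bigr => x _.
rewrite big_distrr /=; apply: eq_bigr => y _.
rewrite mulnCA; congr (_ * _)%N.
rewrite sum_V -sum_const_nat; apply: eq_bigr => d' _.
apply: eq_bigr => x' _; apply: eq_bigr => y' _.
by rewrite comm_mk.
Qed.

Lemma e2 (R : finComUnitRingType) :
  (\sum_(x : R) \sum_(y : R) nz x y * Kp x y + \sum_(x : R) \sum_(y : R) nz x y
   = \sum_(x : R) \sum_(y : R) nz x y * K x y)%N.
Proof.
rewrite -big_split /=; apply: eq_bigr => x _.
rewrite -big_split /=; apply: eq_bigr => y _.
by rewrite -Kp_K mulnDr muln1.
Qed.

Lemma e4 (R : finComUnitRingType) :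
  (\sum_(x : R) \sum_(y : R) nz x y + 1 = #|R| * #|R|)%N.
Proof.
rewrite -(sum2_zero R) -big_split -sum_const_nat /=; apply: eq_bigr => x _.
rewrite -big_split -[RHS]muln1 -sum_const_nat /=; apply: eq_bigr => y _.
by rewrite /nz; case: (_ && _).
Qed.

Lemma e5 (R : finComUnitRingType) (p : nat)
  (Hcnt : (\sum_(z : R) (z \notin GRing.unit) = p)%N) :
  (\sum_(x : R) \sum_(y : R) (nz x y && ((x \notin GRing.unit) && (y \notin GRing.unit))) + 1
    = p * p)%N.
Proof.
rewrite -[X in _ + X = _](sum2_zero R) -big_split -{1}Hcnt big_distrl /=; apply: eq_bigr => x _.
rewrite -big_split -Hcnt big_distrr /=; apply: eq_bigr => y _.
rewrite /nz; case: (boolP ((x == 0) && (y == 0))) => [/andP [/eqP -> /eqP ->]|_] /=.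
  by rewrite unitr0.
by case: (x \in GRing.unit); case: (y \in GRing.unit).
Qed.

Lemma e3 (R : finComUnitRingType) (pi : R) (p : nat)
  (Hnu : forall z : R, (pi * z == 0) = (z \notin GRing.unit))
  (Hcnt : (\sum_(z : R) (z \notin GRing.unit) = p)%N)
  (Hfac : forall z : R, z \notin GRing.unit -> exists w, z = pi * w)
  (Hpi2 : pi * pi = 0) :
  (\sum_(x : R) \sum_(y : R) nz x y * K x y
   + (\sum_(x : R) \sum_(y : R) (nz x y && ((x \notin GRing.unit) && (y \notin GRing.unit)))) * #|R|
  = (\sum_(x : R) \sum_(y : R) nz x y) * #|R|
   + (\sum_(x : R) \sum_(y : R) (nz x y && ((x \notin GRing.unit) && (y \notin GRing.unit)))) * (#|R| * p))%N.
Proof.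
rewrite !big_distrl -!big_split /=; apply: eq_bigr => x _.
rewrite !big_distrl -!big_split /=; apply: eq_bigr => y _.
case: (boolP (nz x y)) => H /=; last by rewrite !mul0n.
rewrite (K_val Hnu Hcnt Hfac Hpi2 H).
by case: (_ && _); rewrite ?mul1n ?mul0n ?addn0 // addnC.
Qed.

Lemma edges_generic (R : finComUnitRingType) (pi : R) (p : nat)
  (Hnu : forall z : R, (pi * z == 0) = (z \notin GRing.unit))
  (Hcnt : (\sum_(z : R) (z \notin GRing.unit) = p)%N)
  (Hfac : forall z : R, z \notin GRing.unit -> exists w, z = pi * w)
  (Hpi2 : pi * pi = 0) (Hn : #|R| = (p ^ 2)%N) :
  (#|commEdges R|)%:R
  = (1 / 2 : rat) * (p%:R ^+ 2 * (p%:R ^+ 2 - 1)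
       * (p%:R ^+ 6 + p%:R ^+ 5 - p%:R ^+ 4 - 2 * p%:R ^+ 2 - 1)).
Proof.
have E1 := congr1 (fun m : nat => m%:R : rat) (e1 R).
have E2 := congr1 (fun m : nat => m%:R : rat) (e2 R).
have E3 := congr1 (fun m : nat => m%:R : rat) (e3 Hnu Hcnt Hfac Hpi2).
have E4 := congr1 (fun m : nat => m%:R : rat) (e4 R).
have E5 := congr1 (fun m : nat => m%:R : rat) (e5 Hcnt).
rewrite /= !natrD !natrM Hn natrX in E1 E2 E3 E4 E5.
move: E1 E2 E3 E4 E5.
set e := (#|commEdges R|)%:R.
set Z := (\sum_(x : R) \sum_(y : R) nz x y)%:R.
set Skp := (\sum_(x : R) \sum_(y : R) nz x y * Kp x y)%:R.
set Sk := (\sum_(x : R) \sum_(y : R) nz x y * K x y)%:R.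
set W := (\sum_(x : R) _)%:R.
set P := p%:R => E1 E2 E3 E4 E5.
have hE : e = ((P ^+ 2) * (P ^+ 2) * Skp - (P ^+ 2) * Z) / 2 by rewrite -E1; field.
have hSkp : Skp = Sk - Z by rewrite -E2; ring.
have hSk : Sk = Z * P ^+ 2 + W * (P ^+ 2 * P) - W * P ^+ 2 by rewrite -E3; ring.
have hZ : Z = P ^+ 2 * P ^+ 2 - 1 by rewrite -E4; ring.
have hW : W = P * P - 1 by rewrite -E5; ring.
by rewrite hE hSkp hSk hZ hW; field.
Qed.


Lemma Zp_eq0 (m n : nat) : (1 < m)%N -> ((n%:R : 'Z_m) == 0) = (m %| n)%N.
Proof. by move=> m1; rewrite -val_eqE /= val_Zp_nat. Qed.

Lemma Zunit (p : nat) (hp : prime p) (z : 'Z_(p ^ 2)) : (z \notin GRing.unit) = (p %| z)%N.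
Proof.
have m1 : (1 < p ^ 2)%N by rewrite -mulnn; have := prime_gt1 hp; nia.
by rewrite -[z in LHS]natr_Zp unitZpE // coprime_pexpl // prime_coprime // negbK.
Qed.

Theorem mainTheorem9 (p : nat) (hp : prime p) :
  (#|commEdges 'Z_(p ^ 2)|)%:R
  = (1 / 2 : rat) * (p%:R ^+ 2 * (p%:R ^+ 2 - 1)
       * (p%:R ^+ 6 + p%:R ^+ 5 - p%:R ^+ 4 - 2 * p%:R ^+ 2 - 1)).
Proof.
have m1 : (1 < p ^ 2)%N by rewrite -mulnn; have := prime_gt1 hp; nia.
have p0 := prime_gt0 hp.
apply: (@edges_generic 'Z_(p ^ 2) (p%:R)).
- move=> z; rewrite Zunit // -[z in LHS]natr_Zp -natrM Zp_eq0 //.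
  by rewrite -[X in (X %| _)%N]mulnn dvdn_pmul2l.
  transitivity (\sum_(z : 'Z_(p ^ 2)) (p %| z))%N; first by apply: eq_bigr => z _; rewrite Zunit.
  by rewrite -(big_mkord (fun _ => true) (fun i => nat_of_bool (p %| i)%N)) Zp_cast // -mulnn count_mult.
- move=> z; rewrite Zunit // => hz; exists ((z %/ p)%N%:R).
  by rewrite -natrM mulnC divnK // natr_Zp.
- by apply/eqP; rewrite -natrM Zp_eq0 // mulnn.
- by rewrite card_ord Zp_cast.
Qed.
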